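(* Let $3\le n,q<\omega$, $0\le m\le n$ and $0\le p\le q$. Then $L_6(p,q)\in\mathbf{V}(L_6(m,n))$ if and only if $p\le m$ and either (a) $p=q=m=n$, or (b) $p<q$ and $q\le p+\lfloor (m-p)/2\rfloor+n-m$.
   Context: For a finite set $S$ with $|S|\ge3$ and $I\subseteq S$, $Q_6(I,S)$ is the finite $pm$-space on $S\cup\zeta(S)$, where $\zeta(S)$ is a disjoint copy of $S$, $\zeta$ interchanges each $s\in S$ with its copy $\zeta(s)$, the topology is discrete, and the only strict comparabilities are: for $x,y\in S$, $x<\zeta(y)$ iff ($x\ne y$ or $x\notin I$). $Q_6(m,n)$ denotes $Q_6(I,S)$ with $|S|=n$, $|I|=m$ (unique up to isomorphism). $L_6(m,n)$ is its dual pseudocomplemented de Morgan algebra: the clopen (here: all) decreasing subsets $X$ of $Q_6(m,n)$ with $\cap,\cup,\emptyset$, the whole set, $X^\ast=$ complement of the up-set $[X)$, and $X'=$ complement of $\zeta(X)$. $\mathbf{V}(A)$ denotes the variety generated by $A$. *)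

(* Defs.v *)
From mathcomp Require Import all_boot.
Set Implicit Arguments. Unset Strict Implicit. Unset Printing Implicit Defensive.

Record pdmSig := PdmSig {
  car :> Type;
  pjoin : car -> car -> car;
  pmeet : car -> car -> car;
  pstar : car -> car;
  pneg  : car -> car;
  pbot  : car;
  ptop  : car }.

(* B belongs to V(A) = HSP(A): B is a homomorphic image of a subalgebra of a
   (possibly infinite) direct power A^I. *)
Definition inV (B A : pdmSig) : Prop :=
  exists (I : Type) (S : (I -> A) -> Prop),
    (forall x y, S x -> S y -> S (fun i => pjoin (x i) (y i))) /\
    (forall x y, S x -> S y -> S (fun i => pmeet (x i) (y i))) /\
    (forall x, S x -> S (fun i => pstar (x i))) /\
    (forall x, S x -> S (fun i => pneg (x i))) /\
    S (fun _ => pbot A) /\ S (fun _ => ptop A) /\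
    exists h : (I -> A) -> B,
      (forall x y, S x -> S y -> h (fun i => pjoin (x i) (y i)) = pjoin (h x) (h y)) /\
      (forall x y, S x -> S y -> h (fun i => pmeet (x i) (y i)) = pmeet (h x) (h y)) /\
      (forall x, S x -> h (fun i => pstar (x i)) = pstar (h x)) /\
      (forall x, S x -> h (fun i => pneg (x i)) = pneg (h x)) /\
      h (fun _ => pbot A) = pbot B /\ h (fun _ => ptop A) = ptop B /\
      (forall b : B, exists x, S x /\ h x = b).

(* S = 'I_n, I = {i | i < m}; the point (false, i) is s_i and (true, i) is zeta(s_i). *)
Section Q6.
Variables m n : nat.
Definition Q6 := (bool * 'I_n)%type.

Definition zeta (x : Q6) : Q6 := (~~ x.1, x.2).

Definition q6le (x y : Q6) : bool :=
  (x == y) || [&& ~~ x.1, y.1 & (x.2 != y.2) || (m <= x.2)].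

Definition decreasing (X : {set Q6}) : bool :=
  [forall x, forall y, ((y \in X) && q6le x y) ==> (x \in X)].

Lemma q6le_trans x y z : q6le x y -> q6le y z -> q6le x z.
Proof.
rewrite /q6le; case/orP=> [/eqP -> //|H].
case/orP=> [/eqP <-|/and3P [ny1 _ _]]; first by rewrite H orbT.
by case/and3P: H => _ y1 _; rewrite y1 in ny1.
Qed.

Lemma q6le_zeta x y : q6le x y -> q6le (zeta y) (zeta x).
Proof.
case: x y => [a i] [b j]; rewrite /q6le /zeta /= !xpair_eqE.
case/orP=> [/andP [/eqP -> /eqP ->]|]; first by rewrite !eqxx.
case: a; case: b => //= H.
case/orP: H => [ne|le]; first by rewrite eq_sym ne.
case: (eqVneq j i) => [->|]; by rewrite ?le ?orbT.
Qed.

Record L6T := L6E { lset :> {set Q6}; lsetP : decreasing lset }.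

Lemma decreasingP (X : {set Q6}) :
  reflect (forall x y, y \in X -> q6le x y -> x \in X) (decreasing X).
Proof.
apply: (iffP forallP) => [H x y yX le| H x]; first by move: (forallP (H x) y); rewrite yX le.
by apply/forallP => y; apply/implyP => /andP [yX le]; exact: H yX le.
Qed.

Definition upset (X : {set Q6}) : {set Q6} := [set y | [exists x in X, q6le x y]].

Lemma dec_join (X Y : L6T) : decreasing (lset X :|: lset Y).
Proof.
apply/decreasingP => x y; rewrite !inE => /orP [] H le; apply/orP;
  [left; exact: (decreasingP _ (lsetP X)) H le|right; exact: (decreasingP _ (lsetP Y)) H le].
Qed.

Lemma dec_meet (X Y : L6T) : decreasing (lset X :&: lset Y).
Proof.
apply/decreasingP => x y; rewrite !inE => /andP [H1 H2] le; apply/andP; split;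
  [exact: (decreasingP _ (lsetP X)) H1 le|exact: (decreasingP _ (lsetP Y)) H2 le].
Qed.

Lemma dec_star (X : L6T) : decreasing (~: upset (lset X)).
Proof.
apply/decreasingP => x y; rewrite !inE => Hy le; apply/negP => /existsP [z /andP [zX zx]].
by move/negP: Hy; apply; apply/existsP; exists z; rewrite zX (q6le_trans zx le).
Qed.

Lemma dec_neg (X : L6T) : decreasing [set y | zeta y \notin lset X].
Proof.
apply/decreasingP => x y; rewrite !inE => Hy le; apply/negP => Hx.
by move/negP: Hy; apply; exact: (decreasingP _ (lsetP X)) Hx (q6le_zeta le).
Qed.

Lemma dec_bot : decreasing set0.
Proof. by apply/decreasingP => x y; rewrite inE. Qed.

Lemma dec_top : decreasing setT.
Proof. by apply/decreasingP => x y; rewrite !inE. Qed.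

(* L_6(m,n): all (clopen = all, discrete topology) decreasing subsets of Q_6(m,n), with
   union, intersection, X* = complement of [X), X' = complement of zeta(X), empty set, whole set. *)
Definition L6 : pdmSig :=
  @PdmSig L6T
    (fun X Y => L6E (dec_join X Y))
    (fun X Y => L6E (dec_meet X Y))
    (fun X => L6E (dec_star X))
    (fun X => L6E (dec_neg X))
    (L6E dec_bot)
    (L6E dec_top).
End Q6.

(* Main.v *)
From HB Require Import structures.
Require Import Defs.
From mathcomp Require Import all_boot zify.
From Stdlib Require Import ClassicalEpsilon FunctionalExtensionality Classical.
From Stdlib Require List.
Set Implicit Arguments. Unset Strict Implicit. Unset Printing Implicit Defensive.

Section Basics.
Variables m n : nat.
HB.instance Definition _ := [isSub for @lset m n].
HB.instance Definition _ := [Equality of L6T m n by <:].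
HB.instance Definition _ := [Choice of L6T m n by <:].
HB.instance Definition _ := [Countable of L6T m n by <:].
HB.instance Definition _ := [Finite of L6T m n by <:].

Lemma L6_eq (X Y : L6T m n) : lset X = lset Y -> X = Y.
Proof. by move=> E; apply: val_inj. Qed.

Implicit Types x y z w v : Q6 n.

Lemma q6le_refl x : q6le m x x.
Proof. by rewrite /q6le eqxx. Qed.

Lemma q6leE (b c : bool) (i j : 'I_n) :
  q6le m (b, i) (c, j) = ((b == c) && (i == j)) || [&& ~~ b, c & (i != j) || (m <= i)].
Proof. by rewrite /q6le xpair_eqE. Qed.

Lemma le_bot x (i : 'I_n) : q6le m x (false, i) -> x = (false, i).
Proof. by case: x => [[] j]; rewrite q6leE /= ?andbF ?orbF // => /eqP ->. Qed.

Lemma top_le x (i : 'I_n) : q6le m (true, i) x -> x = (true, i).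
Proof. by case: x => [[] j]; rewrite q6leE /= ?andbF ?orbF // => /eqP ->. Qed.

Lemma q6le_anti x y : q6le m x y -> q6le m y x -> x = y.
Proof.
case: x y => [[] i] [[] j]; rewrite !q6leE /= ?andbF ?orbF ?andbT //.
- by move=> /eqP ->.
- by move=> /eqP ->.
Qed.

Lemma q6_chain w z v : q6le m w z -> q6le m z v -> w != z -> z != v -> False.
Proof.
rewrite /q6le => /orP [/eqP -> |/and3P [_ z1 _]]; first by rewrite eqxx.
by case/orP => [/eqP -> | /and3P [nz1 _ _]]; [rewrite eqxx | rewrite z1 in nz1].
Qed.

Lemma zetaK x : zeta (zeta x) = x.
Proof. by case: x => [b i]; rewrite /zeta /= negbK. Qed.

Lemma q6le_zetaE x y : q6le m (zeta x) (zeta y) = q6le m y x.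
Proof.
apply/idP/idP => H; last exact: q6le_zeta.
by have := q6le_zeta H; rewrite !zetaK.
Qed.

Lemma dP6 (X : L6T m n) x y : y \in lset X -> q6le m x y -> x \in lset X.
Proof. move=> Hy Hle; have H := lsetP X; move/decreasingP: H => H; exact: H Hy Hle. Qed.

Lemma in_star (X : L6T m n) x :
  (x \in lset (@pstar (L6 m n) X)) = ~~ [exists y in lset X, q6le m y x].
Proof. by rewrite /= !inE. Qed.

Lemma in_neg (X : L6T m n) x :
  (x \in lset (@pneg (L6 m n) X)) = (zeta x \notin lset X).
Proof. by rewrite /= !inE. Qed.

Lemma in_join (X Y : L6T m n) x :
  (x \in lset (@pjoin (L6 m n) X Y)) = (x \in lset X) || (x \in lset Y).
Proof. by rewrite /= !inE. Qed.

Lemma in_meet (X Y : L6T m n) x :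
  (x \in lset (@pmeet (L6 m n) X Y)) = (x \in lset X) && (x \in lset Y).
Proof. by rewrite /= !inE. Qed.

Lemma in_bot x : (x \in lset (@pbot (L6 m n))) = false.
Proof. by rewrite /= !inE. Qed.

Lemma in_top x : (x \in lset (@ptop (L6 m n))) = true.
Proof. by rewrite /= !inE. Qed.

End Basics.

Definition Dt (A : pdmSig) (x : A) : A := pstar (pneg x).
Definition t3 (A : pdmSig) (x : A) : A := Dt (Dt (Dt x)).
Definition aT (A : pdmSig) (x y : A) : A := pstar (pmeet x (pstar y)).
Definition eT (A : pdmSig) (x y : A) : A := pjoin x (pneg (pstar (pneg y))).
Definition sT (A : pdmSig) (x y : A) : A :=
  pmeet (pmeet (aT x y) (aT y x)) (pmeet (eT x y) (eT y x)).
Definition ET (A : pdmSig) (x y : A) : A := t3 (sT x y).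

Section ETerm.
Variables m n : nat.
Hypothesis n3 : 3 <= n.
Notation A := (L6 m n).
Implicit Types X Y Z : L6T m n.

Lemma two_other (i : 'I_n) : exists j k : 'I_n, [/\ j != i, k != i & j != k].
Proof.
have h0 : 0 < n by lia. have h1 : 1 < n by lia. have h2 : 2 < n by lia.
pose a : 'I_n := Ordinal h0. pose b : 'I_n := Ordinal h1. pose c : 'I_n := Ordinal h2.
case: (eqVneq i a) => [->|ia].
  by exists b, c; split; apply/eqP; case.
case: (eqVneq i b) => [->|ib].
  by exists a, c; split; apply/eqP; case.
by exists a, b; split; rewrite 1?eq_sym //; apply/eqP; case.
Qed.

Lemma one_other (i : 'I_n) : exists j : 'I_n, j != i.
Proof. by case: (two_other i) => j [k [? _ _]]; exists j. Qed.

Lemma in_Dt X y : (y \in lset (@Dt A X)) = ~~ [exists z, (zeta z \notin lset X) && q6le m z y].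
Proof.
rewrite /Dt in_star; congr (~~ _); apply/existsP/existsP => [] [z].
  by rewrite in_neg => /andP [H1 H2]; exists z; rewrite H1.
by move=> /andP [H1 H2]; exists z; rewrite in_neg H1.
Qed.

Lemma Dt_top X : lset X = setT -> lset (@Dt A X) = setT.
Proof.
move=> E; apply/setP => y; rewrite in_Dt inE; apply/negP => /existsP [z].
by rewrite E inE.
Qed.

Lemma Dt_notop X : (forall i, (true, i) \notin lset X) -> lset (@Dt A X) = set0.
Proof.
move=> H; apply/setP => [[b i]]; rewrite in_Dt inE; apply/negbTE; rewrite negbK.
case: b.
  case: (one_other i) => j ji; apply/existsP; exists (false, j).
  by rewrite /zeta /= H q6leE /= ji.
by apply/existsP; exists (false, i); rewrite /zeta /= H q6le_refl.
Qed.

Lemma Dt_onetop X : (forall i k, (true, i) \in lset X -> (true, k) \in lset X -> i = k) ->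
  forall i, (true, i) \notin lset (@Dt A X).
Proof.
move=> H i; rewrite in_Dt negbK.
case: (two_other i) => j [k [ji ki jk]].
apply/existsP; case: (boolP ((true, j) \in lset X)) => Hj.
  case: (boolP ((true, k) \in lset X)) => Hk.
    by have := H _ _ Hj Hk => E; rewrite E eqxx in jk.
  by exists (false, k); rewrite /zeta /= Hk q6leE /= ki.
by exists (false, j); rewrite /zeta /= Hj q6leE /= ji.
Qed.

Lemma Dt_notQ X : lset X != setT ->
  forall i k, (true, i) \in lset (@Dt A X) -> (true, k) \in lset (@Dt A X) -> i = k.
Proof.
move=> NQ i k; rewrite !in_Dt => /existsPn Hi /existsPn Hk.
apply/eqP; apply: contraNT NQ => ik.
have Ti : forall l : 'I_n, l != i -> (true, l) \in lset X.
  move=> l li; have := Hi (false, l); rewrite q6leE /= li /= andbT negbK.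
  by rewrite /zeta.
have Tk : forall l : 'I_n, l != k -> (true, l) \in lset X.
  move=> l lk; have := Hk (false, l); rewrite q6leE /= lk /= andbT negbK.
  by rewrite /zeta.
have Tall : forall l : 'I_n, (true, l) \in lset X.
  move=> l; case: (eqVneq l i) => [->|li]; last exact: Ti.
  by apply: Tk.
apply/eqP/setP => [[b l]]; rewrite inE; apply/idP; case: b; first exact: Tall.
case: (eqVneq l i) => [->|li].
  have H1 := Tall k. have H2 : q6le m (false, i) (true, k) by rewrite q6leE /= ik. exact: (dP6 H1 H2).
apply: (dP6 (Tall i)); by rewrite q6leE /= li.
Qed.

Lemma t3_top X : lset X = setT -> lset (@t3 A X) = setT.
Proof. by move=> E; rewrite /t3; do 3 apply: Dt_top. Qed.

Lemma t3_notQ X : lset X != setT -> lset (@t3 A X) = set0.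
Proof.
move=> NQ; rewrite /t3; apply: Dt_notop; apply: Dt_onetop; exact: Dt_notQ.
Qed.

Lemma star_setT X : lset (@pstar A X) = setT -> lset X = set0.
Proof.
move=> E; apply/setP => x; rewrite inE; apply/negP => Hx.
have : x \in lset (@pstar A X) by rewrite E inE.
rewrite in_star => /negP; apply; apply/existsP; exists x; by rewrite Hx q6le_refl.
Qed.

Lemma star_set0 X : lset X = set0 -> lset (@pstar A X) = setT.
Proof.
move=> E; apply/setP => x; rewrite in_star inE; apply/existsP => [] [y].
by rewrite E inE.
Qed.

Lemma meet_setT X Y : lset (@pmeet A X Y) = setT <-> lset X = setT /\ lset Y = setT.
Proof.
split.
  move=> E; split; apply/setP => x; have := in_meet X Y x; rewrite E !inE.
    by case: (x \in lset X).
  by case: (x \in lset Y); rewrite ?andbF.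
by case=> E1 E2; apply/setP => x; rewrite in_meet E1 E2 !inE.
Qed.

Lemma aT_refl X : lset (@aT A X X) = setT.
Proof.
apply: star_set0; apply/setP => x; rewrite in_meet in_star inE.
case: (boolP (x \in lset X)) => //= Hx; rewrite negbK.
by apply/existsP; exists x; rewrite Hx q6le_refl.
Qed.

Lemma aT_sound X Y : lset (@aT A X Y) = setT ->
  forall z, z \in lset X -> exists2 w, w \in lset Y & q6le m w z.
Proof.
move/star_setT => E z Hz.
have : z \notin lset (@pmeet A X (@pstar A Y)) by rewrite E inE.
rewrite in_meet Hz in_star /= negbK => /existsP [w /andP [H1 H2]].
by exists w.
Qed.

Lemma in_eT2 Y z : (z \in lset (@pneg A (@pstar A (@pneg A Y)))) =
   [exists w, (zeta w \notin lset Y) && q6le m w (zeta z)].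
Proof.
rewrite in_neg in_star negbK; apply/existsP/existsP => [] [w].
  by rewrite in_neg => /andP [H1 H2]; exists w; rewrite H1.
by move=> /andP [H1 H2]; exists w; rewrite in_neg H1.
Qed.

Lemma eT_refl X : lset (@eT A X X) = setT.
Proof.
apply/setP => z; rewrite in_join in_eT2 inE.
case: (boolP (z \in lset X)) => //= Hz.
by apply/existsP; exists (zeta z); rewrite zetaK Hz q6le_refl.
Qed.

Lemma eT_sound X Y : lset (@eT A X Y) = setT ->
  forall z, z \notin lset X -> exists2 v, v \notin lset Y & q6le m z v.
Proof.
move=> E z Hz; have : z \in lset (@eT A X Y) by rewrite E inE.
rewrite in_join (negbTE Hz) in_eT2 /= => /existsP [w /andP [H1 H2]].
exists (zeta w) => //; by rewrite -q6le_zetaE zetaK.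
Qed.

Lemma sT_refl X : lset (@sT A X X) = setT.
Proof.
rewrite /sT; apply/meet_setT; split; apply/meet_setT; split;
  by rewrite ?aT_refl ?eT_refl.
Qed.

Lemma sT_sound X Y : lset (@sT A X Y) = setT -> X = Y.
Proof.
rewrite /sT => /meet_setT [/meet_setT [a1 a2] /meet_setT [e1 e2]].
have key : forall X Y, lset (@aT A X Y) = setT -> lset (@eT A Y X) = setT ->
    forall z, z \in lset X -> z \in lset Y.
  move=> X1 Y1 Ha He z Hz; apply/negPn/negP => Hn.
  case: (aT_sound Ha Hz) => w Hw wz.
  case: (eT_sound He Hn) => v Hv zv.
  apply: (q6_chain wz zv).
    by apply: contraTneq Hw => ->.
  by apply: contraNneq Hv => <-.
apply: L6_eq; apply/setP => z; apply/idP/idP.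
  exact: key a1 e2 z.
exact: key a2 e1 z.
Qed.

Lemma ET_refl X : lset (@ET A X X) = setT.
Proof. by apply: t3_top; apply: sT_refl. Qed.

Lemma ET_neq X Y : X <> Y -> lset (@ET A X Y) = set0.
Proof.
move=> NE; apply: t3_notQ; apply/eqP => E; exact: NE (sT_sound E).
Qed.

End ETerm.

Definition powS (I : Type) (A : pdmSig) : pdmSig :=
  @PdmSig (I -> A)
    (fun x y i => pjoin (x i) (y i))
    (fun x y i => pmeet (x i) (y i))
    (fun x i => pstar (x i))
    (fun x i => pneg (x i))
    (fun _ => pbot A) (fun _ => ptop A).

Section Terms.
Variables (I : Type) (A B : pdmSig) (S : (I -> A) -> Prop) (h : (I -> A) -> B).
Notation P := (powS I A).
Hypothesis SJ : forall x y, S x -> S y -> S (fun i => pjoin (x i) (y i)).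
Hypothesis SM : forall x y, S x -> S y -> S (fun i => pmeet (x i) (y i)).
Hypothesis SS : forall x, S x -> S (fun i => pstar (x i)).
Hypothesis SN : forall x, S x -> S (fun i => pneg (x i)).
Hypothesis hJ : forall x y, S x -> S y -> h (fun i => pjoin (x i) (y i)) = pjoin (h x) (h y).
Hypothesis hM : forall x y, S x -> S y -> h (fun i => pmeet (x i) (y i)) = pmeet (h x) (h y).
Hypothesis hS : forall x, S x -> h (fun i => pstar (x i)) = pstar (h x).
Hypothesis hN : forall x, S x -> h (fun i => pneg (x i)) = pneg (h x).

Lemma tDt x : S x -> S (@Dt P x) /\ h (@Dt P x) = Dt (h x).
Proof.
move=> Hx; have H1 : S (@pneg P x) := SN Hx.
split; first exact: (SS H1).
rewrite /Dt -(hN Hx); exact: (hS H1).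
Qed.

Lemma tt3 x : S x -> S (@t3 P x) /\ h (@t3 P x) = t3 (h x).
Proof.
move=> Hx; case: (tDt Hx) => H1 E1; case: (tDt H1) => H2 E2; case: (tDt H2) => H3 E3.
by split => //; rewrite /t3 E3 E2 E1.
Qed.

Lemma taT x y : S x -> S y -> S (@aT P x y) /\ h (@aT P x y) = aT (h x) (h y).
Proof.
move=> Hx Hy; have Hs : S (@pstar P y) := SS Hy.
have Hm : S (@pmeet P x (@pstar P y)) := SM Hx Hs.
split; first exact: (SS Hm).
rewrite /aT -(hS Hy) -(hM Hx Hs); exact: (hS Hm).
Qed.

Lemma teT x y : S x -> S y -> S (@eT P x y) /\ h (@eT P x y) = eT (h x) (h y).
Proof.
move=> Hx Hy; have H1 : S (@pneg P y) := SN Hy.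
have H2 : S (@pstar P (@pneg P y)) := SS H1.
have H3 : S (@pneg P (@pstar P (@pneg P y))) := SN H2.
split; first exact: (SJ Hx H3).
rewrite /eT -(hN Hy) -(hS H1) -(hN H2); exact: (hJ Hx H3).
Qed.

Lemma tET x y : S x -> S y -> S (@ET P x y) /\ h (@ET P x y) = ET (h x) (h y).
Proof.
move=> Hx Hy.
case: (taT Hx Hy) => S1 E1; case: (taT Hy Hx) => S2 E2.
case: (teT Hx Hy) => S3 E3; case: (teT Hy Hx) => S4 E4.
have S5 : S (@pmeet P (@aT P x y) (@aT P y x)) := SM S1 S2.
have S6 : S (@pmeet P (@eT P x y) (@eT P y x)) := SM S3 S4.
have S7 : S (@sT P x y) := SM S5 S6.
case: (tt3 S7) => S8 E8; split => //.
rewrite /ET E8 /sT; congr t3.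
rewrite -E1 -E2 -E3 -E4 -(hM S1 S2) -(hM S3 S4); exact: (hM S5 S6).
Qed.
End Terms.

Definition ishom (m n p q : nat) (phi : L6T p q -> L6T m n) :=
  (forall X Y, phi (@pjoin (L6 p q) X Y) = @pjoin (L6 m n) (phi X) (phi Y)) /\
  (forall X Y, phi (@pmeet (L6 p q) X Y) = @pmeet (L6 m n) (phi X) (phi Y)) /\
  (forall X, phi (@pstar (L6 p q) X) = @pstar (L6 m n) (phi X)) /\
  (forall X, phi (@pneg (L6 p q) X) = @pneg (L6 m n) (phi X)) /\
  phi (@pbot (L6 p q)) = @pbot (L6 m n) /\
  phi (@ptop (L6 p q)) = @ptop (L6 m n).

Section Bits.
Variables m n : nat.
Notation A := (L6 m n).

Definition bit (u : L6T m n) := lset u = set0 \/ lset u = setT.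

Lemma setT_neq0 (n0 : 0 < n) : (setT : {set Q6 n}) <> set0.
Proof.
move=> E; have : ((false, Ordinal n0) : Q6 n) \in (setT : {set Q6 n}) by rewrite inE.
by rewrite E inE.
Qed.

Lemma top_L6 (u : L6T m n) : lset u = setT -> u = @ptop A.
Proof. by move=> E; apply: L6_eq. Qed.
Lemma bot_L6 (u : L6T m n) : lset u = set0 -> u = @pbot A.
Proof. by move=> E; apply: L6_eq. Qed.

Lemma bit_neg u : bit u -> bit (@pneg A u).
Proof.
case=> E; [right|left]; apply/setP => x; rewrite in_neg E !inE //.
Qed.

Lemma bit_meet u v : bit u -> bit v -> bit (@pmeet A u v).
Proof.
case=> E1; case=> E2; [left|left|left|right]; apply/setP => x;
  by rewrite in_meet E1 E2 !inE.
Qed.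

Lemma bit_top : bit (@ptop A). Proof. by right. Qed.

Lemma neg_set0 u : lset u = set0 -> lset (@pneg A u) = setT.
Proof. by move=> E; apply/setP => x; rewrite in_neg E !inE. Qed.

Lemma neg_setT u : lset u = setT -> lset (@pneg A u) = set0.
Proof. by move=> E; apply/setP => x; rewrite in_neg E !inE. Qed.

Lemma meet_setT' u v : lset (@pmeet A u v) = setT -> lset u = setT /\ lset v = setT.
Proof. by move/meet_setT. Qed.

Hypothesis n3 : 3 <= n.
Lemma bit_ET u v : bit (@ET A u v).
Proof.
case: (eqVneq u v) => [->|/eqP ne]; first by right; apply: ET_refl.
by left; apply: ET_neq.
Qed.

Lemma ET_eq u v : lset (@ET A u v) = setT -> u = v.
Proof.
move=> E; apply: NNPP => ne.
have n0 : 0 < n by lia.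
by have := ET_neq n3 ne; rewrite E; apply: setT_neq0.
Qed.
End Bits.

Section Reduce.
Variables m n p q : nat.
Hypotheses (n3 : 3 <= n) (q3 : 3 <= q).
Notation A := (L6 m n).
Notation B := (L6 p q).
Variables (I : Type) (S : (I -> A) -> Prop) (h : (I -> A) -> B).
Notation P := (powS I A).
Hypothesis SJ : forall x y, S x -> S y -> S (fun i => pjoin (x i) (y i)).
Hypothesis SM : forall x y, S x -> S y -> S (fun i => pmeet (x i) (y i)).
Hypothesis SS : forall x, S x -> S (fun i => pstar (x i)).
Hypothesis SN : forall x, S x -> S (fun i => pneg (x i)).
Hypothesis S0 : S (fun _ => pbot A).
Hypothesis S1 : S (fun _ => ptop A).
Hypothesis hJ : forall x y, S x -> S y -> h (fun i => pjoin (x i) (y i)) = pjoin (h x) (h y).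
Hypothesis hM : forall x y, S x -> S y -> h (fun i => pmeet (x i) (y i)) = pmeet (h x) (h y).
Hypothesis hS : forall x, S x -> h (fun i => pstar (x i)) = pstar (h x).
Hypothesis hN : forall x, S x -> h (fun i => pneg (x i)) = pneg (h x).
Hypothesis h0 : h (fun _ => pbot A) = pbot B.
Hypothesis h1 : h (fun _ => ptop A) = ptop B.

Definition good (w : I -> A) := [/\ S w, h w = ptop B & forall i, bit (w i)].

Lemma good_fold ws : (forall w, List.In w ws -> good w) ->
  good (foldr (fun w acc => @pmeet P w acc) (@ptop P) ws) /\
  forall i, lset (foldr (fun w acc => @pmeet P w acc) (@ptop P) ws i) = setT ->
     forall w, List.In w ws -> lset (w i) = setT.
Proof.
elim: ws => [|w ws IH] H /=.
  by split => //; split => // i; right.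
have [[Sa ha ba] Ha] := IH (fun w' Hw' => H w' (or_intror Hw')).
have [Sw hw bw] := H w (or_introl erefl).
split.
  split; first exact: (SM Sw Sa).
    rewrite (hM Sw Sa) hw ha; apply: L6_eq; apply/setP => x; by rewrite in_meet !inE.
  by move=> i; apply: bit_meet.
move=> i /meet_setT' [E1 E2] w' [<- //|Hin]; exact: Ha.
Qed.

Lemma good_list ws : (forall w, List.In w ws -> good w) ->
  exists i, forall w, List.In w ws -> lset (w i) = setT.
Proof.
move=> H; have [[SM' hM' bM] HM] := good_fold H.
set M := foldr _ _ ws in SM' hM' bM HM.
apply: NNPP => NE.
have Mb : M = (fun _ => pbot A).
  apply: functional_extensionality => i; apply: L6_eq.
  case: (bM i) => // E; exfalso; apply: NE; exists i; exact: HM.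
move: hM'; rewrite Mb h0 => E.
have : lset (@pbot B) = lset (@ptop B) by rewrite E.
move=> /= E'; apply: (@setT_neq0 q); first by lia. by rewrite E'.
Qed.

Hypothesis hsurj : forall b : B, exists x, S x /\ h x = b.

Lemma inIn (T : eqType) (x : T) (s : seq T) : x \in s -> List.In x s.
Proof. elim: s => //= y s IH; rewrite inE => /orP [/eqP ->|/IH]; auto. Qed.

Lemma goodE u v : S u -> S v -> h u = h v -> good (@ET P u v).
Proof.
move=> Hu Hv Huv.
case: (tET SJ SM SS SN hJ hM hS hN Hu Hv) => SE hE; split => //.
  rewrite hE Huv; apply: top_L6; exact: ET_refl.
move=> i; exact: (bit_ET n3 (u i) (v i)).
Qed.

Lemma emb : exists phi : L6T p q -> L6T m n, injective phi /\ ishom phi.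
Proof.
have xsP : forall b : L6T p q, {x | S x /\ h x = b}.
  move=> b; apply: constructive_indefinite_description; exact: hsurj.
pose xs b := proj1_sig (xsP b).
have Sx b : S (xs b) := proj1 (proj2_sig (xsP b)).
have hx b : h (xs b) = b := proj2 (proj2_sig (xsP b)).
pose E2 u v := @ET P u v.
pose gen (b c : L6T p q) : seq (I -> A) :=
  [:: E2 (@pjoin P (xs b) (xs c)) (xs (@pjoin B b c));
      E2 (@pmeet P (xs b) (xs c)) (xs (@pmeet B b c));
      E2 (@pstar P (xs b)) (xs (@pstar B b));
      E2 (@pneg P (xs b)) (xs (@pneg B b));
      if b == c then @ptop P else @pneg P (E2 (xs b) (xs c))].
pose ws := E2 (xs (@pbot B)) (@pbot P) :: E2 (xs (@ptop B)) (@ptop P) ::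
   List.flat_map (fun b => List.flat_map (fun c => gen b c) (enum {: L6T p q})) (enum {: L6T p q}).
have Hg : forall w, List.In w ws -> good w.
  move=> w; rewrite /ws /=; case => [<-|[<-|]].
  - by apply: goodE => //; rewrite hx h0.
  - by apply: goodE => //; rewrite hx h1.
  move/List.in_flat_map => [b [_ /List.in_flat_map [c [_ Hw]]]].
  move: Hw; rewrite /gen /=; case => [<-|[<-|[<-|[<-|[<-|[]]]]]].
  - apply: goodE; [exact: (SJ (Sx b) (Sx c))|exact: Sx|by rewrite (hJ (Sx b) (Sx c)) !hx].
  - apply: goodE; [exact: (SM (Sx b) (Sx c))|exact: Sx|by rewrite (hM (Sx b) (Sx c)) !hx].
  - apply: goodE; [exact: (SS (Sx b))|exact: Sx|by rewrite (hS (Sx b)) !hx].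
  - apply: goodE; [exact: (SN (Sx b))|exact: Sx|by rewrite (hN (Sx b)) !hx].
  case: eqP => [_|ne].
    by split => // i; exact: bit_top.
  case: (tET SJ SM SS SN hJ hM hS hN (Sx b) (Sx c)) => SE hE.
  split; first exact: (SN SE).
    rewrite (hN SE) hE !hx; apply: top_L6; apply: neg_set0; exact: ET_neq.
  move=> i; exact: (bit_neg (bit_ET n3 (xs b i) (xs c i))).
have [i Hi] := good_list Hg.
have inG : forall b c w, List.In w (gen b c) -> List.In w ws.
  move=> b c w Hw; right; right; apply/List.in_flat_map; exists b; split.
    by apply: inIn; rewrite mem_enum.
  apply/List.in_flat_map; exists c; split => //.
  by apply: inIn; rewrite mem_enum.
exists (fun b => xs b i); split.
  move=> b c /= Ebc; apply: NNPP => /eqP ne.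
  have Hin : List.In (@pneg P (E2 (xs b) (xs c))) ws.
    apply: (inG b c); rewrite /gen (negbTE ne) /=; tauto.
  have E' : lset (@pneg A (@ET A (xs b i) (xs c i))) = setT := Hi _ Hin.
  move: E'; rewrite Ebc; rewrite (neg_setT (ET_refl _)) => E0.
  by apply: (@setT_neq0 n); [lia|rewrite E0].
split.
  move=> b c; symmetry; apply: (ET_eq n3).
  have Hin : List.In (E2 (@pjoin P (xs b) (xs c)) (xs (@pjoin B b c))) ws.
    by apply: (inG b c); rewrite /gen /=; tauto.
  exact: (Hi _ Hin).
split.
  move=> b c; symmetry; apply: (ET_eq n3).
  have Hin : List.In (E2 (@pmeet P (xs b) (xs c)) (xs (@pmeet B b c))) ws.
    by apply: (inG b c); rewrite /gen /=; tauto.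
  exact: (Hi _ Hin).
split.
  move=> b; symmetry; apply: (ET_eq n3).
  have Hin : List.In (E2 (@pstar P (xs b)) (xs (@pstar B b))) ws.
    by apply: (inG b b); rewrite /gen /=; tauto.
  exact: (Hi _ Hin).
split.
  move=> b; symmetry; apply: (ET_eq n3).
  have Hin : List.In (E2 (@pneg P (xs b)) (xs (@pneg B b))) ws.
    by apply: (inG b b); rewrite /gen /=; tauto.
  exact: (Hi _ Hin).
split.
  apply: (ET_eq n3).
  have Hin : List.In (E2 (xs (@pbot B)) (@pbot P)) ws by rewrite /ws /=; tauto.
  exact: (Hi _ Hin).
apply: (ET_eq n3).
have Hin : List.In (E2 (xs (@ptop B)) (@ptop P)) ws by rewrite /ws /=; tauto.
exact: (Hi _ Hin).
Qed.

End Reduce.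

Lemma inV_emb m n p q : 3 <= n -> 3 <= q -> inV (L6 p q) (L6 m n) ->
  exists phi : L6T p q -> L6T m n, injective phi /\ ishom phi.
Proof.
move=> n3 q3 [I [S [SJ [SM [SS [SN [S0 [S1 [h [hJ [hM [hS [hN [h0 [h1 hs]]]]]]]]]]]]]]].
exact: (emb n3 q3 SJ SM SS SN S0 S1 hJ hM hS hN h0 h1 hs).
Qed.

Section Down.
Variables p q : nat.
Implicit Types y z w : Q6 q.

Lemma dec_dn y : decreasing p [set z | q6le p z y].
Proof.
apply/decreasingP => x z; rewrite !inE => H1 H2; exact: q6le_trans H2 H1.
Qed.
Definition dn y : L6T p q := L6E (dec_dn y).

Lemma dec_sdn y : decreasing p [set z | q6le p z y && (z != y)].
Proof.
apply/decreasingP => x z; rewrite !inE => /andP [H1 H2] H3.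
rewrite (q6le_trans H3 H1) /=; apply: contraNneq H2 => E; rewrite E in H3.
exact/eqP/(q6le_anti H1 H3).
Qed.
Definition sdn y : L6T p q := L6E (dec_sdn y).

Lemma in_dn y z : (z \in lset (dn y)) = q6le p z y.
Proof. by rewrite /= inE. Qed.
Lemma in_sdn y z : (z \in lset (sdn y)) = q6le p z y && (z != y).
Proof. by rewrite /= inE. Qed.

Lemma dec_del (Y : L6T p q) y :
  (forall z, z \in lset Y -> q6le p y z -> z = y) -> decreasing p (lset Y :\ y).
Proof.
move=> Hmax; apply/decreasingP => x z; rewrite !inE => /andP [zy zY] xz.
rewrite (dP6 zY xz) andbT; apply: contraNneq zy => E; subst x.
by apply/eqP; apply: Hmax.
Qed.
End Down.

Section Dual.
Variables m n p q : nat.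
Hypotheses (n3 : 3 <= n) (q3 : 3 <= q).
Notation A := (L6 m n).
Notation B := (L6 p q).
Variable phi : L6T p q -> L6T m n.
Hypothesis phi_inj : injective phi.
Hypothesis phi_hom : ishom phi.

Let phiJ := proj1 phi_hom.
Let phiM := proj1 (proj2 phi_hom).
Let phiS := proj1 (proj2 (proj2 phi_hom)).
Let phiN := proj1 (proj2 (proj2 (proj2 phi_hom))).
Let phi0 := proj1 (proj2 (proj2 (proj2 (proj2 phi_hom)))).
Let phi1 := proj2 (proj2 (proj2 (proj2 (proj2 phi_hom)))).

Lemma phi_mono (X Y : L6T p q) : lset X \subset lset Y ->
  forall x, x \in lset (phi X) -> x \in lset (phi Y).
Proof.
move=> sXY x Hx.
have E : @pmeet B X Y = X by apply: L6_eq; apply/setP => z; rewrite in_meet;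
  case: (boolP (z \in lset X)) => //= zX; exact: (subsetP sXY).
by move: Hx; rewrite -E phiM in_meet => /andP [].
Qed.

Lemma decomp (Y : L6T p q) x : x \in lset (phi Y) ->
  exists2 y, y \in lset Y & x \in lset (phi (dn p y)).
Proof.
move: {2}#|lset Y| (leqnn #|lset Y|) => k; elim: k Y => [|k IH] Y.
  rewrite leqn0 cards_eq0 => /eqP E.
  have -> : Y = @pbot B by apply: L6_eq.
  by rewrite phi0 in_bot.
move=> Hk Hx.
case: (set_0Vmem (lset Y)) => [E|[y0 y0Y]].
  have EY : Y = @pbot B by apply: L6_eq.
  by move: Hx; rewrite EY phi0 in_bot.
pose y := if [pick i | (true, i) \in lset Y] is Some i then (true, i) else y0.
have yY : y \in lset Y by rewrite /y; case: pickP.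
have ymax : forall z, z \in lset Y -> q6le p y z -> z = y.
  rewrite /y; case: pickP => [i _ z _|nt z zY]; first by move/top_le.
  clear yY y; move: y0Y zY; case: y0 => [[] i] y0Y zY.
    by have := nt i; rewrite y0Y.
  case: z zY => [[] j] zY; rewrite q6leE /= ?andbF ?orbF.
    by have := nt j; rewrite zY.
  by move/eqP => ->.
pose Y' : L6T p q := L6E (dec_del ymax).
have EY : Y = @pjoin B (dn p y) Y'.
  apply: L6_eq; apply/setP => z; rewrite in_join in_dn /= !inE.
  case: (eqVneq z y) => [->|zy] /=; first by rewrite yY q6le_refl.
  case: (boolP (z \in lset Y)) => zY; first by rewrite orbT.
  rewrite orbF; apply/esym/negP => Hle; move/negP: zY; apply; exact: dP6 yY Hle.
have Hx2 := Hx; rewrite EY phiJ in_join in Hx2; case/orP: Hx2 => [H|H]; first by exists y.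
have Hc : #|lset Y'| <= k.
  have : #|lset Y :\ y| < #|lset Y| by apply: proper_card; apply: properD1 yY.
  move=> Hlt; change (#|lset Y :\ y| <= k); lia.
case: (IH Y' Hc H) => z zY' Hz; exists z => //.
by move: zY'; rewrite /= !inE => /andP [].
Qed.

Definition Px (x : Q6 n) (y : Q6 q) := x \in lset (phi (dn p y)).
Definition Pmin (x : Q6 n) (y : Q6 q) :=
  Px x y && [forall z, (q6le p z y && (z != y)) ==> ~~ Px x z].

Lemma Pmin_ex x : exists y, Pmin x y.
Proof.
have : x \in lset (phi (@ptop B)) by rewrite phi1 in_top.
case/decomp => y _ Hy.
case: (boolP [forall z, (q6le p z y && (z != y)) ==> ~~ Px x z]) => Hm.
  by exists y; rewrite /Pmin Hm andbT.
move/forallPn: Hm => [z]; rewrite negb_imply negbK => /andP [/andP [zy nzy] Pz].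
exists z; rewrite /Pmin Pz /=; apply/forallP => w; apply/implyP => /andP [wz nwz].
move: zy nzy; rewrite /q6le => /orP [/eqP ->|/and3P [z1 _ _]]; first by rewrite eqxx.
move=> _; case: z z1 wz nwz Pz => [[] j] // _ wz.
by rewrite (le_bot wz) eqxx.
Qed.

Let q0 : 0 < q. Proof. by lia. Qed.
Definition f (x : Q6 n) : Q6 q :=
  odflt ((false, Ordinal q0) : Q6 q) [pick y | Pmin x y].

Lemma fP x : Pmin x (f x).
Proof.
rewrite /f; case: pickP => [y //|H].
by case: (Pmin_ex x) => y Hy; have := H y; rewrite Hy.
Qed.

Lemma F1 (Y : L6T p q) x : (x \in lset (phi Y)) = (f x \in lset Y).
Proof.
have /andP [Pf0 Hmin] := fP x.
have Pf : x \in lset (phi (dn p (f x))) := Pf0.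
apply/idP/idP => H.
  have : x \in lset (phi (@pmeet B Y (dn p (f x)))) by rewrite phiM in_meet H Pf.
  case/decomp => y; rewrite in_meet in_dn => /andP [yY yf] Hy.
  case: (eqVneq y (f x)) => [<- //|ne].
  by have := forallP Hmin y; rewrite yf ne /= => /negP; case.
apply: (phi_mono _ Pf); apply/subsetP => z; rewrite in_dn => Hz.
exact: dP6 H Hz.
Qed.

Lemma f_mono z x : q6le m z x -> q6le p (f z) (f x).
Proof.
move=> zx; have : x \in lset (phi (dn p (f x))) by rewrite F1 in_dn q6le_refl.
move=> Hx; have := dP6 Hx zx; by rewrite F1 in_dn.
Qed.

Lemma f_surj y : exists x, f x = y.
Proof.
apply: NNPP => H.
have E : phi (dn p y) = phi (sdn p y).
  apply: L6_eq; apply/setP => x; rewrite !F1 in_dn in_sdn.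
  have -> : (f x != y) = true by apply/eqP => E; apply: H; exists x.
  by rewrite andbT.
have := phi_inj E => E'.
have : y \in lset (dn p y) by rewrite in_dn q6le_refl.
by rewrite E' in_sdn eqxx andbF.
Qed.

Lemma f_zeta x : f (zeta x) = zeta (f x).
Proof.
have key : forall Y : L6T p q, (zeta (f x) \in lset Y) = (f (zeta x) \in lset Y).
  move=> Y; have := phiN Y => E.
  have : (x \in lset (phi (@pneg B Y))) = (x \in lset (@pneg A (phi Y))) by rewrite E.
  by rewrite F1 !in_neg F1 => /negb_inj.
apply: (@q6le_anti p).
  by have := key (dn p (zeta (f x))); rewrite !in_dn q6le_refl => <-.
by have := key (dn p (f (zeta x))); rewrite !in_dn q6le_refl => ->.
Qed.

Lemma f_star (Y : L6T p q) x :
  [exists y in lset Y, q6le p y (f x)] = [exists z, (f z \in lset Y) && q6le m z x].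
Proof.
have E := phiS Y.
have : (x \in lset (phi (@pstar B Y))) = (x \in lset (@pstar A (phi Y))) by rewrite E.
rewrite F1 !in_star => /negb_inj ->.
by apply/existsP/existsP => [] [z Hz]; exists z; rewrite ?F1 in Hz *.
Qed.

Lemma f_bot (i : 'I_n) : (f (false, i)).1 = false.
Proof.
apply/negP => H.
have [k Ek] : exists k, f (false, i) = (true, k).
  by case: (f (false, i)) H => [[] k] // _; exists k.
have Et : f (true, i) = (false, k).
  by have := f_zeta (false, i); rewrite /zeta /= Ek.
have Ej : forall j : 'I_n, j != i -> f (false, j) = (false, k).
  move=> j ji.
  have : q6le m (false, i) (true, j) by rewrite q6leE /= eq_sym ji.
  move/f_mono; rewrite Ek => /top_le Ef.
  by have := f_zeta (true, j); rewrite /zeta /= Ef.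
case: (two_other n3 i) => j [l [ji li jl]].
have : q6le m (false, j) (true, l) by rewrite q6leE /= jl.
move/f_mono; rewrite Ej //.
have -> : f (true, l) = (true, k).
  by have := f_zeta (false, l); rewrite /zeta /= Ej.
rewrite q6leE /= eqxx /= => pk.
have := f_star (dn p (false, k)) (false, i).
rewrite Ek.
have -> : [exists y in lset (dn p (false, k)), q6le p y (true, k)].
  by apply/existsP; exists (false, k); rewrite in_dn q6le_refl q6leE /= pk orbT.
move/esym/existsP => [z /andP [Hz zi]].
by move: Hz; rewrite (le_bot zi) Ek in_dn q6leE /=.
Qed.

Definition g (i : 'I_n) : 'I_q := (f (false, i)).2.

Lemma f_false i : f (false, i) = (false, g i).
Proof. by rewrite /g; case: (f (false, i)) (f_bot i) => [b k] /= ->. Qed.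

Lemma f_true i : f (true, i) = (true, g i).
Proof. by have := f_zeta (false, i); rewrite /zeta /= f_false. Qed.

Lemma g_surj k : exists i, g i = k.
Proof.
case: (f_surj (false, k)) => [[[] i]]; first by rewrite f_true.
by rewrite f_false => [[<-]]; exists i.
Qed.

Lemma g_D (l : 'I_n) (a : 'I_q) :
  ((a != g l) || (p <= a)) <-> exists i, g i = a /\ ((i != l) || (m <= i)).
Proof.
have := f_star (dn p (false, a)) (true, l).
rewrite f_true.
have -> : [exists y in lset (dn p (false, a)), q6le p y (true, g l)] = (a != g l) || (p <= a).
  apply/existsP/idP => [[y /andP [Hy Hle]]|H].
    by move: Hle; rewrite in_dn in Hy; rewrite (le_bot Hy) q6leE.
  by exists (false, a); rewrite in_dn q6le_refl q6leE /= H.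
move=> ->; split.
  move/existsP => [[b i] /andP [Hz Hle]].
  case: b Hz Hle => Hz Hle; first by move: Hz; rewrite f_true in_dn q6leE.
  move: Hz; rewrite f_false in_dn q6leE /= orbF => /eqP <-.
  by exists i; split => //; rewrite q6leE /= in Hle.
move=> [i [<- H]]; apply/existsP; exists (false, i).
by rewrite f_false in_dn q6le_refl q6leE /= H.
Qed.

End Dual.

Lemma emb_comb m n p q (phi : L6T p q -> L6T m n) :
  3 <= n -> 3 <= q -> injective phi -> ishom phi ->
  exists g : 'I_n -> 'I_q, (forall k, exists i, g i = k) /\
    (forall l a, ((a != g l) || (p <= a)) <-> exists i, g i = a /\ ((i != l) || (m <= i))).
Proof.
move=> n3 q3 inj hom; exists (g n3 q3 phi); split.
  exact: (g_surj n3 q3 inj hom).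
exact: (g_D n3 q3 hom).
Qed.

Lemma sum_w (m n : nat) : \sum_(i < n) (1 + (m <= i)) = n + (n - m).
Proof.
elim: n => [|n IH]; first by rewrite big_ord0.
rewrite big_ord_recr /= IH; case: leqP => H; lia.
Qed.

Lemma sum_lt (m n : nat) : \sum_(i < n) (i < m) = minn m n.
Proof.
elim: n => [|n IH]; first by rewrite big_ord0; lia.
rewrite big_ord_recr /= IH; case: ltnP => H; lia.
Qed.

Lemma arith_fin (m n p q : nat) : m <= n -> p <= q -> p <= m ->
  q + (q - p) <= n + (n - m) -> (p = q -> n + (n - m) = q) ->
  p <= m /\ ((p = q /\ q = m /\ m = n) \/ (p < q /\ q <= p + (m - p) %/ 2 + (n - m))).
Proof.
move=> mn pq pm H1 H2; split => //.
case: (ltnP p q) => pq'.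
  right; split => //; lia.
left; have E : p = q by lia.
have := H2 E; lia.
Qed.

Lemma comb_conc m n p q (g : 'I_n -> 'I_q) : m <= n -> p <= q ->
  (forall k, exists i, g i = k) ->
  (forall l a, ((a != g l) || (p <= a)) <-> exists i, g i = a /\ ((i != l) || (m <= i))) ->
  p <= m /\ ((p = q /\ q = m /\ m = n) \/ (p < q /\ q <= p + (m - p) %/ 2 + (n - m))).
Proof.
move=> mn pq surj D.
have P1 : forall (k : 'I_q) (i : 'I_n), k < p -> g i = k ->
    i < m /\ forall j, g j = k -> j = i.
  move=> k i kp gik; have [_ H] := D i k.
  have F : ~ exists j, g j = k /\ ((j != i) || (m <= j)).
    by move/H; rewrite gik eqxx /= leqNgt kp.
  split.
    rewrite ltnNge; apply/negP => mi; apply: F; exists i; by rewrite gik mi orbT.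
  move=> j gj; apply/eqP; apply/negPn/negP => ji; apply: F; exists j; by rewrite gj ji.
have P2 : forall k : 'I_q, p <= k ->
    exists i, g i = k /\ ((m <= i) \/ exists j, j != i /\ g j = k).
  move=> k pk; case: (surj k) => l gl.
  have [H _] := D l k; case: (H (introT orP (or_intror pk))) => i [gi].
  case/orP => Hi; exists i; split => //.
    by right; exists l; split => //; rewrite eq_sym.
  by left.
pose w (i : 'I_n) := 1 + (m <= i).
have Hp : forall F : 'I_n -> nat, \sum_(i < n) F i = \sum_(k < q) \sum_(i < n | g i == k) F i.
  by move=> F; rewrite (partition_big g xpredT).
have Fk1 : forall k : 'I_q, k < p -> \sum_(i < n | g i == k) w i = 1 + (p <= k).
  move=> k kp; case: (surj k) => l gl; have [lm U] := P1 k l kp gl.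
  rewrite (big_pred1 l); last by move=> i /=; apply/eqP/eqP => [/U|->].
  rewrite /w; have -> : (m <= l) = false by apply/negbTE; rewrite -ltnNge.
  by have -> : (p <= k) = false by apply/negbTE; rewrite -ltnNge.
have Fk2 : forall k : 'I_q, p <= k -> 1 + (p <= k) <= \sum_(i < n | g i == k) w i.
  move=> k pk; rewrite pk; case: (P2 k pk) => i [gi [mi|[j [ji gj]]]].
    rewrite (bigD1 i) /=; last by rewrite gi.
    by rewrite /w mi; lia.
  rewrite (bigD1 i) /=; last by rewrite gi.
  rewrite (bigD1 j) /=; last by rewrite gj eqxx ji.
  rewrite /w; lia.
have Hge : q + (q - p) <= n + (n - m).
  rewrite -sum_w -(sum_w m n) (Hp w); apply: leq_sum => k _.
  case: (ltnP k p) => kp; first by rewrite Fk1.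
  by have := Fk2 k kp; rewrite kp.
have Heq : p = q -> n + (n - m) = q.
  move=> E; rewrite -(sum_w m n) (Hp w).
  rewrite (eq_bigr (fun k : 'I_q => 1 + (p <= k))); first by rewrite sum_w; lia.
  move=> k _; apply: Fk1; rewrite E; exact: ltn_ord.
have pm : p <= m.
  have : minn p q <= minn m n.
    rewrite -sum_lt -(sum_lt m n) (Hp (fun i => (i < m : nat))); apply: leq_sum => k _.
    case: (boolP (k < p)) => kp; last by [].
    case: (surj k) => l gl; have [lm _] := P1 k l kp gl.
    rewrite (bigD1 l) /=; last by rewrite gl.
    by rewrite lm; lia.
  lia.
exact: arith_fin.
Qed.

Section Build.
Variables m n p q : nat.
Hypothesis n0 : 0 < n.
Variable g : 'I_n -> 'I_q.
Hypothesis gsurj : forall k, exists i, g i = k.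
Hypothesis gD : forall l a, ((a != g l) || (p <= a)) <-> exists i, g i = a /\ ((i != l) || (m <= i)).
Notation A := (L6 m n).
Notation B := (L6 p q).

Definition fb (x : Q6 n) : Q6 q := (x.1, g x.2).

Lemma fb_mono x y : q6le m x y -> q6le p (fb x) (fb y).
Proof.
case: x y => [b i] [c j]; rewrite /fb /= !q6leE => /orP [/andP [/eqP -> /eqP ->]|].
  by rewrite !eqxx.
case/and3P => -> -> H /=; apply/orP; right.
by apply/(gD j (g i)); exists i.
Qed.

Lemma fb_zeta x : fb (zeta x) = zeta (fb x).
Proof. by case: x. Qed.

Lemma fb_surj y : exists x, fb x = y.
Proof. case: y => b k; case: (gsurj k) => i gi; exists (b, i); by rewrite /fb gi. Qed.

Lemma dec_pre (Y : L6T p q) : decreasing m [set x | fb x \in lset Y].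
Proof.
apply/decreasingP => x y; rewrite !inE => Hy Hle; exact: dP6 Hy (fb_mono Hle).
Qed.
Definition phib (Y : L6T p q) : L6T m n := L6E (dec_pre Y).

Lemma in_phib Y x : (x \in lset (phib Y)) = (fb x \in lset Y).
Proof. by rewrite /= inE. Qed.

Lemma phib_hom : ishom phib.
Proof.
split; first by move=> X Y; apply: L6_eq; apply/setP => x; rewrite in_join !in_phib in_join.
split; first by move=> X Y; apply: L6_eq; apply/setP => x; rewrite in_meet !in_phib in_meet.
split.
  move=> Y; apply: L6_eq; apply/setP => x; rewrite in_star !in_phib in_star; congr (~~ _).
  apply/existsP/existsP => [[y /andP [yY yf]]|[z /andP [zY zx]]]; last first.
    by exists (fb z); rewrite -in_phib zY (fb_mono zx).
  case: (eqVneq y (fb x)) => [E|ne].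
    by exists x; rewrite in_phib -E yY q6le_refl.
  case: x yf ne => [b l]; case: y yY => [c a] yY.
  rewrite /fb /= q6leE => /orP [/andP [/eqP -> /eqP ->]|]; first by rewrite eqxx.
  case/and3P => /negbTE c0 b1 H _; move: b1; case: b => // _; move: c0 yY; case: c => // _ yY.
  case: (proj1 (gD l a) H) => i [gi Hi].
  exists (false, i); rewrite in_phib /fb /= gi yY /= q6leE /=; exact: Hi.
split.
  move=> Y; apply: L6_eq; apply/setP => x; rewrite in_neg !in_phib in_neg.
  by rewrite fb_zeta.
split; first by apply: L6_eq; apply/setP => x; rewrite in_phib !in_bot.
by apply: L6_eq; apply/setP => x; rewrite in_phib !in_top.
Qed.

Lemma phib_inj : injective phib.
Proof.
move=> X Y E; apply: L6_eq; apply/setP => y.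
case: (fb_surj y) => x <-; by rewrite -!in_phib E.
Qed.

Let i0 : 'I_n := Ordinal n0.
Definition sec (y : Q6 q) : Q6 n := (y.1, odflt i0 [pick i | g i == y.2]).
Lemma fb_sec y : fb (sec y) = y.
Proof.
case: y => b k; rewrite /sec /fb /=; case: pickP => [i /eqP -> //|H].
by case: (gsurj k) => i gi; have := H i; rewrite gi eqxx.
Qed.

Lemma dec_psi (X : L6T m n) : decreasing p [set y | [forall z, q6le p z y ==> (sec z \in lset X)]].
Proof.
apply/decreasingP => x y; rewrite !inE => /forallP H xy; apply/forallP => z.
apply/implyP => zx; exact: (implyP (H z) (q6le_trans zx xy)).
Qed.
Definition psi (X : L6T m n) : L6T p q := L6E (dec_psi X).

Lemma psi_phib Y : psi (phib Y) = Y.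
Proof.
apply: L6_eq; apply/setP => y; rewrite /= inE; apply/forallP/idP => [H|yY z].
  by have := implyP (H y) (q6le_refl _ _); rewrite inE fb_sec.
by apply/implyP => zy; rewrite inE fb_sec; exact: dP6 yY zy.
Qed.

Lemma build_inV : inV B A.
Proof.
have [hJ [hM [hS [hN [h0 h1]]]]] := phib_hom.
exists unit, (fun x => exists Y, forall i, x i = phib Y).
split; first by move=> x y [X Hx] [Y Hy]; exists (@pjoin B X Y) => i; rewrite hJ Hx Hy.
split; first by move=> x y [X Hx] [Y Hy]; exists (@pmeet B X Y) => i; rewrite hM Hx Hy.
split; first by move=> x [X Hx]; exists (@pstar B X) => i; rewrite hS Hx.
split; first by move=> x [X Hx]; exists (@pneg B X) => i; rewrite hN Hx.
split; first by exists (@pbot B) => i; rewrite h0.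
split; first by exists (@ptop B) => i; rewrite h1.
exists (fun x => psi (x tt)).
split; first by move=> x y [X Hx] [Y Hy]; cbv beta; rewrite !Hx !Hy -hJ !psi_phib.
split; first by move=> x y [X Hx] [Y Hy]; cbv beta; rewrite !Hx !Hy -hM !psi_phib.
split; first by move=> x [X Hx]; cbv beta; rewrite !Hx -hS !psi_phib.
split; first by move=> x [X Hx]; cbv beta; rewrite !Hx -hN !psi_phib.
split; first by cbv beta; rewrite -h0 psi_phib.
split; first by cbv beta; rewrite -h1 psi_phib.
move=> b; exists (fun _ => phib b); split; first by exists b.
by rewrite psi_phib.
Qed.
End Build.

Lemma G_to_g (m n p q : nat) (G : nat -> nat) :
  (forall i, i < n -> G i < q) ->
  (forall k, k < q -> exists2 i, i < n & G i = k) ->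
  (forall i, i < n -> G i < p -> i < m /\ forall j, j < n -> G j = G i -> j = i) ->
  (forall k, p <= k -> k < q -> exists i, [/\ i < n, G i = k &
      (m <= i \/ exists j, [/\ j < n, j != i & G j = k])]) ->
  exists g : 'I_n -> 'I_q, (forall k, exists i, g i = k) /\
    (forall l a, ((a != g l) || (p <= a)) <-> exists i, g i = a /\ ((i != l) || (m <= i))).
Proof.
move=> HG HS P1 P2.
pose g (i : 'I_n) : 'I_q := Ordinal (HG i (ltn_ord i)).
have gE : forall i a, (g i = a) <-> (G i = a).
  move=> i a; split => [<- //|E]; by apply: val_inj.
exists g; split.
  move=> k; case: (HS k (ltn_ord k)) => i ni Gi; exists (Ordinal ni); exact/gE.
move=> l a; split.
  case: (eqVneq a (g l)) => [E|ne] /= H.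
    case: (P2 a H (ltn_ord a)) => i [ni Gi [mi|[j [nj ji Gj]]]].
      by exists (Ordinal ni); split; [exact/gE|rewrite /= mi orbT].
    case: (eqVneq (Ordinal ni) l) => [El|nl].
      exists (Ordinal nj); split; first exact/gE.
      apply/orP; left; rewrite -El; apply/eqP => /(congr1 val) /= E'.
      by rewrite E' eqxx in ji.
    by exists (Ordinal ni); split; [exact/gE|rewrite nl].
  case: (HS a (ltn_ord a)) => i ni Gi; exists (Ordinal ni); split; first exact/gE.
  apply/orP; left; apply: contraNneq ne => E; rewrite -E; apply/eqP; apply: val_inj => /=.
  by rewrite Gi.
move=> [i [gi H]]; case: (ltnP a p) => ap; rewrite ?orbT //=.
rewrite orbF; apply/eqP => E.
have Gl : G l < p by have Ea : val a = G l := congr1 val E; rewrite -Ea.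
have [lm U] := P1 l (ltn_ord l) Gl.
have il : val i = val l.
  apply: U; first exact: ltn_ord.
  rewrite (proj1 (gE i a) gi); exact: (congr1 val E).
move: H; rewrite (_ : i = l); last exact: val_inj.
by rewrite eqxx /= leqNgt lm.
Qed.

Lemma exists_g (m n p q : nat) : 3 <= n -> 3 <= q -> m <= n -> p <= q ->
  p <= m /\ ((p = q /\ q = m /\ m = n) \/ (p < q /\ q <= p + (m - p) %/ 2 + (n - m))) ->
  exists g : 'I_n -> 'I_q, (forall k, exists i, g i = k) /\
    (forall l a, ((a != g l) || (p <= a)) <-> exists i, g i = a /\ ((i != l) || (m <= i))).
Proof.
move=> n3 q3 mn pq [pm [[E1 [E2 E3]]|[pq' Hq]]].
  subst p q m; apply: (@G_to_g n n n n id) => //.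
  - by move=> k kn; exists k.
  - by move=> k H1 H2; lia.
set r := (m - p) %/ 2.
have r2 : 2 * r <= m - p by rewrite /r; lia.
pose T i := if i < p then i else if i < p + 2 * r then p + (i - p) %/ 2
            else if i < m then p else p + r + (i - m).
pose G i := minn (T i) (q - 1).
have P2 : forall k, p <= k -> k < q -> exists i, [/\ i < n, G i = k &
      (m <= i \/ exists j, [/\ j < n, j != i & G j = k])].
  move=> k pk kq; case: (ltnP k (p + r)) => kr.
    exists (p + 2 * (k - p)); split.
    - lia.
    - rewrite /G /T; have -> : (p + 2 * (k - p) < p) = false by lia.
      have -> : (p + 2 * (k - p) < p + 2 * r) = true by lia.
      have -> : (p + 2 * (k - p) - p) %/ 2 = k - p by lia.
      lia.
    right; exists (p + 2 * (k - p) + 1); split.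
    - lia.
    - lia.
    - rewrite /G /T; have -> : (p + 2 * (k - p) + 1 < p) = false by lia.
      have -> : (p + 2 * (k - p) + 1 < p + 2 * r) = true by lia.
      have -> : (p + 2 * (k - p) + 1 - p) %/ 2 = k - p by lia.
      lia.
  exists (m + (k - p - r)); split.
  - rewrite /r in kr *; lia.
  - rewrite /G /T; have -> : (m + (k - p - r) < p) = false by lia.
    have -> : (m + (k - p - r) < p + 2 * r) = false by lia.
    have -> : (m + (k - p - r) < m) = false by lia.
    lia.
  - by left; lia.
apply: (@G_to_g m n p q G).
- by move=> i _; rewrite /G; lia.
- move=> k kq; case: (ltnP k p) => kp.
    exists k; first by lia.
    by rewrite /G /T kp; lia.
  by case: (P2 k kp kq) => i [ni Gi _]; exists i.
- move=> i ni; rewrite /G /T.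
  case: (ltnP i p) => ip.
    move=> _; split; first by lia.
    move=> j nj; case: (ltnP j p) => jp; first by lia.
    case: ifP => _; first by lia.
    case: ifP => _; lia.
  case: ifP => _; first by lia.
  case: ifP => _; lia.
- exact: P2.
Qed.

Theorem theorem5p5 (m n p q : nat) :
  3 <= n -> 3 <= q -> m <= n -> p <= q ->
  (inV (L6 p q) (L6 m n) <->
   p <= m /\
   ((p = q /\ q = m /\ m = n) \/
    (p < q /\ q <= p + (m - p) %/ 2 + (n - m)))).
Proof.
move=> n3 q3 mn pq; split.
  move/(inV_emb n3 q3) => [phi [inj hom]].
  have [g [gs gD]] := emb_comb n3 q3 inj hom.
  exact: (comb_conc mn pq gs gD).
move/(exists_g n3 q3 mn pq) => [g [gs gD]].
have n0 : 0 < n by lia.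
exact: (build_inV n0 gs gD).
Qed.
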